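(* Modularity is not monotonic: there exist a graph $G=(V,E)$, a clustering $C$ of $G$, and a $C$-consistent improvement $G'=(V,E')$ of $G$ (with both modularities defined) such that $Q_{\mathrm{mod}}(G',C)<Q_{\mathrm{mod}}(G,C)$.
   Context: A (symmetric weighted) graph is a pair $G=(V,E)$ of a finite set $V$ and $E:V\times V\to\mathbb{R}_{\ge 0}$ symmetric; self loops allowed. A clustering is a partition of $V$ into nonempty disjoint clusters; write $i\sim_C j$ if $i,j$ lie in the same cluster of $C$. For $c\subseteq V$, $v_c=\sum_{i\in c}\sum_{j\in V}E(i,j)$ and $w_c=\sum_{i,j\in c}E(i,j)$. Modularity: $Q_{\mathrm{mod}}(G,C)=\sum_{c\in C}\left(\frac{w_c}{v_V}-\left(\frac{v_c}{v_V}\right)^2\right)$ (defined when $v_V>0$). A graph $G'=(V,E')$ is a $C$-consistent improvement of $G=(V,E)$ if $E'(i,j)\ge E(i,j)$ whenever $i\sim_C j$ and $E'(i,j)\le E(i,j)$ whenever $i\not\sim_C j$. *)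

(* Defs.v *)
From mathcomp Require Import all_boot all_order all_algebra.
Set Implicit Arguments. Unset Strict Implicit. Unset Printing Implicit Defensive.
Import Order.TTheory GRing.Theory Num.Theory.
Local Open Scope ring_scope.

Definition is_graph (R : realFieldType) (V : finType) (E : V -> V -> R) : Prop :=
  (forall i j, E i j = E j i) /\ (forall i j, 0 <= E i j).

(* A clustering: a partition of V into nonempty disjoint clusters
   (finset's [partition] excludes the empty block). *)
Definition is_clustering (V : finType) (C : {set {set V}}) : bool :=
  partition C [set: V].

Definition same_cluster (V : finType) (C : {set {set V}}) (i j : V) : bool :=
  [exists c in C, (i \in c) && (j \in c)].

Definition vol (R : realFieldType) (V : finType) (E : V -> V -> R) (c : {set V}) : R :=
  \sum_(i in c) \sum_(j : V) E i j.

Definition wgt (R : realFieldType) (V : finType) (E : V -> V -> R) (c : {set V}) : R :=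
  \sum_(i in c) \sum_(j in c) E i j.

Definition Qmod (R : realFieldType) (V : finType) (E : V -> V -> R)
    (C : {set {set V}}) : R :=
  \sum_(c in C) (wgt E c / vol E [set: V] - (vol E c / vol E [set: V]) ^+ 2).

Definition consistent_improvement (R : realFieldType) (V : finType)
    (C : {set {set V}}) (E E' : V -> V -> R) : Prop :=
  forall i j, (same_cluster C i j -> E i j <= E' i j) /\
              (~~ same_cluster C i j -> E' i j <= E i j).

(* Main.v *)
Require Import Defs.
From mathcomp Require Import all_boot all_order all_algebra.
From mathcomp Require Import lra.
Import Order.TTheory GRing.Theory Num.Theory.
Local Open Scope ring_scope.

Theorem theorem3 (R : realFieldType) :
  exists (V : finType) (E E' : V -> V -> R) (C : {set {set V}}),
    is_graph E /\ is_graph E' /\ is_clustering C /\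
    consistent_improvement C E E' /\
    0 < vol E [set: V] /\ 0 < vol E' [set: V] /\
    Qmod E' C < Qmod E C.
Proof.
pose E := fun i j : bool => if i == j then 1 else 0 : R.
pose E' := fun i j : bool => if i == j then (if i then 3 else 1) else 0 : R.
pose C := [set [set true]; [set false]].
have hC : is_clustering C.
  rewrite /is_clustering /partition; apply/and3P; split.
  - apply/eqP/setP => x; rewrite inE; apply/bigcupP; exists [set x]; last by rewrite inE.
    by case: x; rewrite !inE eqxx ?orbT.
  - apply/trivIsetP => A B; rewrite !inE => /orP[]/eqP-> /orP[]/eqP->; rewrite ?eqxx //= => _;
    by rewrite -setI_eq0; apply/eqP/setP => y; rewrite !inE; case: y.
  - rewrite !inE; apply/norP; split; apply/eqP => /setP H; move: (H true) (H false); by rewrite !inE.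
have hsc : forall i : bool, same_cluster C i i.
  move=> i; apply/existsP; exists [set i]; case: i; rewrite !inE eqxx ?orbT //.
have nin : [set true] \notin [set [set false]].
  by rewrite inE; apply/eqP => /setP/(_ true); rewrite !inE.
have volT : forall F : bool -> bool -> R, vol F [set: bool] = F true true + F true false + (F false true + F false false).
  by move=> F; rewrite /vol; under eq_bigl do rewrite inE; rewrite !big_bool.
have Qm : forall F : bool -> bool -> R, Qmod F C =
   (F true true / vol F [set: bool] - ((F true true + F true false) / vol F [set: bool]) ^+ 2) +
   (F false false / vol F [set: bool] - ((F false true + F false false) / vol F [set: bool]) ^+ 2).
  move=> F; rewrite /Qmod /C big_setU1 //= big_set1 /wgt /vol !big_set1 !big_bool.
  by [].
exists bool, E, E', C; split; last split; last split => //; last split.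
- split; first by move=> i j; rewrite /E eq_sym.
  by move=> i j; rewrite /E; case: ifP.
- split; first by move=> i j; rewrite /E' eq_sym; case: i; case: j.
  by move=> i j; rewrite /E'; case: i; case: j.
- move=> i j; split => H.
    by move: H; rewrite /E /E'; case: i; case: j => _ /=; lra.
  move: H; have [<-|/negPf Hn] := eqVneq i j; first by rewrite hsc.
  by rewrite /E /E' Hn.
- rewrite !Qm !volT /E /E' /=.
  split; first by lra. split; first by lra. rewrite !addr0 !add0r !expr2.
  have ht : (3+1:R) * (3+1)^-1 = 1 by rewrite mulfV //; apply/eqP; lra.
  have hh : (1+1:R) * (1+1)^-1 = 1 by rewrite mulfV //; apply/eqP; lra.
  move: ht hh; set t := (3+1:R)^-1; set h := (1+1:R)^-1 => ht hh.
  have -> : t = 1/4 by lra. have -> : h = 1/2 by lra. lra.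
Qed.
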